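(* Suppose GDD message passing reaches a fixed point in finitely many steps, i.e. it reaches messages $\boldsymbol\lambda$ such that performing the block update for any $c\in\mathcal{C}'$ does not change $\boldsymbol\lambda$. Let $b_t$, $t\in\mathcal{T}$, be the beliefs for these messages. Then for every $c\in\mathcal{C}'$ and every $s\in\mathcal{S}(c)\setminus\{c\}$ there exist $\hat{\mathbf{x}}_c\in\arg\max_{\mathbf{x}_c}b_c(\mathbf{x}_c)$ and $\bar{\mathbf{x}}_s\in\arg\max_{\mathbf{x}_s}b_s(\mathbf{x}_s)$ such that the restriction $\hat{\mathbf{x}}_s$ of $\hat{\mathbf{x}}_c$ to $s$ equals $\bar{\mathbf{x}}_s$.
   Context: Let $\mathcal{V}=\{1,\dots,n\}$; each variable $x_i$ takes values in a finite set, $\mathbf{x}_s=(x_i)_{i\in s}$ for $s\subseteq\mathcal{V}$. Let $\mathcal{C}$ be a collection of subsets of $\mathcal{V}$ with real potentials $\theta_c(\mathbf{x}_c)$. Let $\mathcal{C}'$ be a finite collection of subsets of $\mathcal{V}$ and for each $c\in\mathcal{C}'$ let $\mathcal{S}(c)$ be a collection of subsets of $c$ (possibly containing $c$), with $\mathcal{S}(c)\setminus\{c\}\neq\emptyset$ and $\mathcal{C}'\cup\bigcup_c\mathcal{S}(c)\supseteq\mathcal{C}$; put $\mathcal{T}=\mathcal{C}'\cup\bigcup_{c\in\mathcal{C}'}\mathcal{S}(c)$. Messages are reals $\lambda_{c\to s}(\mathbf{x}_s)$, $c\in\mathcal{C}'$, $s\in\mathcal{S}(c)\setminus\{c\}$.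 For $t\in\mathcal{T}$: $\hat\theta_t=\mathbb{1}(t\in\mathcal{C})\theta_t$; $\gamma_t(\mathbf{x}_t)=\mathbb{1}(t\in\mathcal{C}')\sum_{\hat s\in\mathcal{S}(t)\setminus\{t\}}\lambda_{t\to\hat s}(\mathbf{x}_{\hat s})$; $\lambda_t(\mathbf{x}_t)=\sum_{c'\in\mathcal{C}':\,t\in\mathcal{S}(c')\setminus\{c'\}}\lambda_{c'\to t}(\mathbf{x}_t)$; beliefs $b_t=\hat\theta_t+\lambda_t-\gamma_t$. For $s\in\mathcal{S}(c)\setminus\{c\}$, $\lambda_s^{-c}(\mathbf{x}_s)=\sum_{\hat c\in\mathcal{C}':\,\hat c\ne c,\ s\in\mathcal{S}(\hat c)\setminus\{\hat c\}}\lambda_{\hat c\to s}(\mathbf{x}_s)$. GDD message passing starts from zero messages and repeatedly sweeps over $c\in\mathcal{C}'$, each time applying the block update: replace simultaneously every $\lambda_{c\to s}(\mathbf{x}_s)$, $s\in\mathcal{S}(c)\setminus\{c\}$, by $\lambda^*_{c\to s}(\mathbf{x}_s)=-\hat\theta_s(\mathbf{x}_s)+\gamma_s(\mathbf{x}_s)-\lambda_s^{-c}(\mathbf{x}_s)+\frac{1}{|\mathcal{S}(c)\setminus\{c\}|}\max_{\mathbf{x}_{c\setminus s}}[\hat\theta_c(\mathbf{x}_c)+\lambda_c(\mathbf{x}_c)+\sum_{\hat s\in\mathcal{S}(c)\setminus\{c\}}(\hat\theta_{\hat s}-\gamma_{\hat s}+\lambda^{-c}_{\hat s})(\mathbf{x}_{\hat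 s})]$, computed from the current messages. *)

(* Defs.v *)
From HB Require Import structures.
From mathcomp Require Import all_boot all_order all_algebra.
From mathcomp Require Import reals.
Set Implicit Arguments. Unset Strict Implicit. Unset Printing Implicit Defensive.
Import Order.TTheory GRing.Theory Num.Theory.
Local Open Scope ring_scope.

Section GDD.
Variable R : realType.
Variable n : nat.
Variable X : 'I_n -> finType.

(* A (partial) assignment: Some v on the assigned variables, None elsewhere.
   An assignment x_s of the variables in s is a pasg x with [asg_on s x]. *)
Definition pasg := {dffun forall i : 'I_n, option (X i)}.

Definition asg_on (s : {set 'I_n}) (x : pasg) : bool :=
  [forall i, (x i != None) == (i \in s)].

Definition restr (s : {set 'I_n}) (x : pasg) : pasg :=
  [ffun i => if i \in s then x i else None].

(* messages lambda_{c -> s}(x_s), indexed by (c, s) *)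
Definition msgs := {set 'I_n} -> {set 'I_n} -> pasg -> R.

Definition zero_msgs : msgs := fun _ _ _ => 0.

Variable x0 : forall i, X i.
Variable C : {set {set 'I_n}}.
Variable theta : {set 'I_n} -> pasg -> R.
Variable C' : {set {set 'I_n}}.
Variable S : {set 'I_n} -> {set {set 'I_n}}.

Definition Sm (c : {set 'I_n}) := S c :\ c.

Definition thetah (t : {set 'I_n}) (x : pasg) : R :=
  if t \in C then theta t x else 0.

Section Msgs.
Variable lam : msgs.

Definition gam (t : {set 'I_n}) (x : pasg) : R :=
  if t \in C' then \sum_(s in Sm t) lam t s (restr s x) else 0.

Definition lamin (t : {set 'I_n}) (x : pasg) : R :=
  \sum_(c' in C' | t \in Sm c') lam c' t x.

Definition lamminus (c s : {set 'I_n}) (x : pasg) : R :=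
  \sum_(c' in C' | (c' != c) && (s \in Sm c')) lam c' s x.

Definition belief (t : {set 'I_n}) (x : pasg) : R :=
  thetah t x + lamin t x - gam t x.

(* the expression maximized in the block update for c *)
Definition Fc (c : {set 'I_n}) (y : pasg) : R :=
  thetah c y + lamin c y +
  \sum_(s' in Sm c) (thetah s' (restr s' y) - gam s' (restr s' y)
                      + lamminus c s' (restr s' y)).

(* a canonical extension of x_s to an assignment of c (used only as the
   seed of the max below, which is over a nonempty set) *)
Definition ext (c s : {set 'I_n}) (xs : pasg) : pasg :=
  [ffun i => if i \in s then xs i else if i \in c then Some (x0 i) else None].

(* max_{x_{c \ s}} G(x_c), as a function of x_s *)
Definition maxext (c s : {set 'I_n}) (G : pasg -> R) (xs : pasg) : R :=
  \big[Num.max/G (ext c s xs)]_(y | asg_on c y && (restr s y == xs)) G y.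

Definition lamstar (c s : {set 'I_n}) (xs : pasg) : R :=
  - thetah s xs + gam s xs - lamminus c s xs
  + (#|Sm c|%:R)^-1 * maxext c s (Fc c) xs.

End Msgs.

Definition block_update (c : {set 'I_n}) (lam : msgs) : msgs :=
  fun c' s' x => if (c' == c) && (s' \in Sm c) then lamstar lam c s' x
                 else lam c' s' x.

Definition run (cs : seq {set 'I_n}) : msgs :=
  foldl (fun lam c => block_update c lam) zero_msgs cs.

Definition fixed_point (lam : msgs) : Prop :=
  forall c, c \in C' -> forall s, s \in Sm c -> forall xs, asg_on s xs ->
    block_update c lam c s xs = lam c s xs.

Definition T : {set {set 'I_n}} := C' :|: \bigcup_(c in C') S c.

End GDD.

(* Main.v *)
Require Import Defs.
From HB Require Import structures.
From mathcomp Require Import all_boot all_order all_algebra.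
From mathcomp Require Import reals.
From mathcomp Require Import ring.
Import Order.TTheory GRing.Theory Num.Theory.
Local Open Scope ring_scope.

Set Implicit Arguments. Unset Strict Implicit.
Section Aux.
Variable R : realType.
Variable n : nat.
Variable X : 'I_n -> finType.

Lemma restr_on (c s : {set 'I_n}) (y : pasg X) :
  s \subset c -> asg_on c y -> asg_on s (restr s y).
Proof.
move=> sc /forallP hy; apply/forallP => i; rewrite ffunE.
case: ifP => his; last by rewrite eqxx.
by have := hy i; rewrite (subsetP sc _ his) => /eqP ->.
Qed.

Lemma ext_on (x0 : forall i, X i) (c s : {set 'I_n}) (xs : pasg X) :
  s \subset c -> asg_on s xs -> asg_on c (ext x0 c s xs) && (restr s (ext x0 c s xs) == xs).
Proof.
move=> sc /forallP hx; apply/andP; split.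
  apply/forallP => i; rewrite ffunE.
  case: ifP => his.
    by have := hx i; rewrite his (subsetP sc _ his).
  by case: ifP.
apply/eqP/ffunP => i; rewrite !ffunE.
case: ifP => his; first by rewrite his.
by have := hx i; rewrite his => /eqP; case: (xs i).
Qed.

Lemma exists_max (T : finType) (P : pred T) (f : T -> R) (x : T) :
  P x -> exists y, P y /\ forall z, P z -> f z <= f y.
Proof.
move=> Px; case: (arg_maxP f Px) => y Py H; exists y; split => // z Pz; exact: H.

Qed.
End Aux.

Theorem proposition4 (R : realType) (n : nat) (X : 'I_n -> finType)
    (x0 : forall i, X i)
    (C : {set {set 'I_n}}) (theta : {set 'I_n} -> pasg X -> R)
    (C' : {set {set 'I_n}}) (S : {set 'I_n} -> {set {set 'I_n}})
    (hS_sub : forall c, c \in C' -> forall s, s \in S c -> s \subset c)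
    (hS_ne : forall c, c \in C' -> Sm S c != set0)
    (hC : C \subset T C' S)
    (cs : seq {set 'I_n}) (hcs : all (mem C') cs)
    (hfix : fixed_point x0 C theta C' S (run x0 C theta C' S cs)) :
  let lam := run x0 C theta C' S cs in
  let b := belief C theta C' S lam in
  forall c, c \in C' -> forall s, s \in Sm S c ->
  exists (xc xs : pasg X),
    [/\ asg_on c xc /\ (forall y, asg_on c y -> b c y <= b c xc),
        asg_on s xs /\ (forall y, asg_on s y -> b s y <= b s xs)
      & restr s xc = xs].
Proof.
move=> lam b c hc s hs.
have hsub : forall s', s' \in Sm S c -> s' \subset c.
  by move=> s'; rewrite /Sm in_setD1 => /andP [_]; apply: hS_sub.
set F := Fc C theta C' S lam c.
set k := (#|Sm S c|%:R : R).
have kpos : 0 < k.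
  rewrite /k ltr0n lt0n; apply/negP => /eqP/cards0_eq h.
  by move: (hS_ne c hc); rewrite h eqxx.
have hlamin : forall s' x, s' \in Sm S c ->
    lamin C' S lam s' x = lam c s' x + lamminus C' S lam c s' x.
  move=> s' x hs'; rewrite /lamin /lamminus (bigD1 c) /=; last by rewrite hc hs'.
  congr (_ + _); apply: eq_bigl => c'.
  by case: (c' \in C'); case: (c' != c); case: (s' \in Sm S c').
have hA : forall s' xs, s' \in Sm S c -> asg_on s' xs ->
    b s' xs = k^-1 * maxext x0 c s' F xs.
  move=> s' xs hs' hxs; have := hfix c hc s' hs' xs hxs.
  rewrite /block_update eqxx hs' /= -/lam => E.
  rewrite /b /belief hlamin // -E /lamstar -/F -/k.
  by rewrite /k; ring.
have hB : forall y, asg_on c y ->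
    b c y = F y - \sum_(s' in Sm S c) b s' (restr s' y).
  move=> y hy; rewrite /b /belief /F /Fc /gam hc.
  have -> : \sum_(s' in Sm S c) lam c s' (restr s' y) =
    \sum_(s' in Sm S c) (belief C theta C' S lam s' (restr s' y)
      - (thetah C theta s' (restr s' y) - gam C' S lam s' (restr s' y)
         + lamminus C' S lam c s' (restr s' y))).
    apply: eq_bigr => s' hs'; rewrite /belief hlamin //; ring.
  rewrite sumrB; ring.
have hC1 : forall s' y, asg_on c y -> F y <= maxext x0 c s' F (restr s' y).
  move=> s' y hy; rewrite /maxext.
  by apply: le_bigmax_cond; rewrite hy eqxx.
have hC2 : forall s' xs M, s' \in Sm S c -> asg_on s' xs ->
    (forall y, asg_on c y -> F y <= M) -> maxext x0 c s' F xs <= M.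
  move=> s' xs M hs' hxs hM; rewrite /maxext; apply: bigmax_le.
    by apply: hM; case/andP: (ext_on x0 (hsub _ hs') hxs).
  by move=> y /andP [hy _]; apply: hM.
have hy0 : asg_on c ([ffun i => if i \in c then Some (x0 i) else None] : pasg X).
  by apply/forallP => i; rewrite ffunE; case: ifP.
have [ys [hys ymax]] := exists_max F hy0.
have heq : forall s', s' \in Sm S c -> maxext x0 c s' F (restr s' ys) = F ys.
  move=> s' hs'; apply/eqP; rewrite eq_le hC1 // andbT.
  by apply: hC2 hs' (restr_on (hsub _ hs') hys) ymax.
exists ys, (restr s ys); split => //; split => //.
- move=> y hy.
  have -> : b c ys = 0.
    rewrite hB // (eq_bigr (fun _ => k^-1 * F ys)); last first.
      by move=> s' hs'; rewrite hA ?heq //; apply: restr_on (hsub _ hs') hys.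
    by rewrite sumr_const -mulr_natr -/k mulrC mulrA mulfV ?gt_eqF // mul1r subrr.
  rewrite hB // subr_le0.
  apply: (@le_trans _ _ (\sum_(s' in Sm S c) k^-1 * F y)).
    by rewrite sumr_const -mulr_natr -/k mulrC mulrA mulfV ?gt_eqF // mul1r.
  apply: ler_sum => s' hs'; rewrite hA //; last by apply: restr_on (hsub _ hs') hy.
  by rewrite ler_pM2l ?invr_gt0 // hC1.
- by apply: restr_on (hsub _ hs) hys.
- move=> z hz; rewrite !hA //; last by apply: restr_on (hsub _ hs) hys.
  rewrite heq // ler_pM2l ?invr_gt0 //.
  by apply: hC2.
Qed.
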